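(* Let $G_0^*$ be a $(k,r_0)$-regular hypergraph on $n$ vertices and $G_1^*$ a $(k,r_1)$-regular hypergraph on $m$ vertices. List the eigenvalues of $S(G_0^* )$ with multiplicity as $n-1-2r_0(k-1),\mu_2^{(0)},\dots,\mu_n^{(0)}$, where $\mu_2^{(0)},\dots,\mu_n^{(0)}$ are the eigenvalues of $S(G_0^* )$ on the orthogonal complement of the all-ones vector; similarly list the eigenvalues of $S(G_1^* )$ as $m-1-2r_1(k-1),\mu_2^{(1)},\dots,\mu_m^{(1)}$. Let $\mathcal{S}$ be the Seidel corona matrix of $G_0^*$ and $G_1^*$, and $b=\binom{m-1}{k-2}$. Then the spectrum of $\mathcal{S}$ (as a multiset) consists of: the $2(n-1)$ numbers $$\frac{\mu_i^{(0)}-1-2r_1(k-1)\pm\sqrt{\big(\mu_i^{(0)}+1+2r_1(k-1)\big)^2+16mb^2}}{2},\qquad i=2,\dots,n;$$ each $\mu_j^{(1)}$, $j=2,\dots,m$, with multiplicity $n$; and the two roots $\alpha_1,\alpha_2$ of $$\mu^2+\big(2-n(m+1)+2(r_0+r_1)(k-1)\big)\mu+\big(n-1-2r_0(k-1)\big)\big(mn-1-2r_1(k-1)\big)-m(n-2b)^2=0.$$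
   Context: All hypergraphs are finite and simple: a hypergraph $G^*=(V,E)$ consists of a finite vertex set $V$ and a set $E$ of subsets of $V$ (hyperedges), each of size at least $2$. It is $k$-uniform if every hyperedge has exactly $k$ elements, and $(k,r)$-regular if it is $k$-uniform and every vertex lies in exactly $r$ hyperedges. For a hypergraph with vertices $v_1,\dots,v_n$, the adjacency matrix $A(G^* )$ is the $n\times n$ matrix whose $(i,j)$ entry, for $i\ne j$, is the number of hyperedges containing both $v_i$ and $v_j$, and whose diagonal entries are $0$; the Seidel matrix is $S(G^* )=J_n-I_n-2A(G^* )$. $J_n$ (resp. $J_{a,b}$) is the all-ones $n\times n$ (resp. $a\times b$) matrix, $I_n$ the identity, $\otimes$ the Kronecker product. Binomial coefficients $\binom{x}{y}$ with integers $x\ge 0$ and $y$ are $0$ when $y<0$ or $y>x$. Seidel corona matrix: for $k$-uniform hypergraphs $G_0^*$ on $n$ vertices and $G_1^*$ on $m$ vertices, with $b=\binom{m-1}{k-2}$, $$\mathcal{S}=\begin{bmatrix}S(G_0^* ) & J_{1,m}\otimes(J_n-2bI_n)\\ J_{m,1}\otimes(J_n-2bI_n) & J_m\otimes(J_n-I_n)+S(G_1^* )\otimes I_n\end{bmatrix},$$ which equals $J_{n(m+1)}-I_{n(m+1)}-2\mathcal{A}$ for $\mathcal{A}=\begin{bmatrix}A(G_0^* ) & b(J_{1,m}\otimes I_n)\\ b(J_{m,1}\otimes I_n) & A(G_1^* )\otimes I_n\end{bmatrix}$. *)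

(* Defs.v *)
From HB Require Import structures.
From mathcomp Require Import all_boot all_order all_algebra.
From mathcomp Require Export mxtens.
Set Implicit Arguments. Unset Strict Implicit. Unset Printing Implicit Defensive.
Import Order.TTheory GRing.Theory Num.Theory.
Local Open Scope ring_scope.

Definition is_hypergraph (n : nat) (E : {set {set 'I_n}}) : Prop :=
  forall e, e \in E -> (2 <= #|e|)%N.

Definition is_regular_hypergraph (n k r : nat) (E : {set {set 'I_n}}) : Prop :=
  is_hypergraph E /\
  (forall e, e \in E -> #|e| = k) /\
  (forall v : 'I_n, #|[set e in E | v \in e]| = r).

Definition hadj (R : pzRingType) (n : nat) (E : {set {set 'I_n}}) : 'M[R]_n :=
  \matrix_(i, j) (if i != j then (#|[set e in E | (i \in e) && (j \in e)]|)%:R else 0).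

Definition hseidel (R : pzRingType) (n : nat) (E : {set {set 'I_n}}) : 'M[R]_n :=
  const_mx 1 - 1%:M - 2%:R *: hadj R E.

(* b = binom(m-1, k-2), with the convention binom(x,y) = 0 for y < 0 *)
Definition corona_b (m k : nat) : nat := if (k < 2)%N then 0%N else 'C(m.-1, k - 2).

(* Seidel corona matrix, rows/columns indexed by 'I_(n + m*n); Kronecker product
   is [tensmx] (A *t B), index (i1,i2) |-> i1 * (#rows of B) + i2. *)
Definition seidel_corona (R : pzRingType) (n m k : nat)
  (E0 : {set {set 'I_n}}) (E1 : {set {set 'I_m}}) : 'M[R]_(n + m * n) :=
  let b : R := (corona_b m k)%:R in
  let X : 'M[R]_n := const_mx 1 - (2%:R * b) *: 1%:M in
  block_mx (hseidel R E0)
           (castmx (mul1n n, erefl) (tensmx (const_mx 1 : 'M[R]_(1, m)) X))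
           (castmx (erefl, mul1n n) (tensmx (const_mx 1 : 'M[R]_(m, 1)) X))
           (tensmx (const_mx 1 : 'M[R]_m) (const_mx 1 - 1%:M : 'M[R]_n)
              + tensmx (hseidel R E1) (1%:M : 'M[R]_n)).

(* Main.v *)
Require Import Defs.
From HB Require Import structures.
From mathcomp Require Import all_boot all_order all_fingroup all_algebra.
From mathcomp Require Import ring.
Import Order.TTheory GRing.Theory Num.Theory.
Local Open Scope ring_scope.
Set Implicit Arguments. Unset Strict Implicit. Unset Printing Implicit Defensive.


Lemma mul_const (R : fieldType) p q s (a b : R) :
  (const_mx a : 'M[R]_(p, q)) *m (const_mx b : 'M[R]_(q, s)) = const_mx (a * b *+ q).
Proof.
apply/matrixP=> i j; rewrite !mxE.
under eq_bigr do rewrite !mxE.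
by rewrite sumr_const card_ord.
Qed.

Section U.
Variable R : numFieldType.
Variable p : nat.
Let s : R := (p.+1)%:R^-1.
Definition Umx : 'M[R]_(1 + p) := block_mx 1 (const_mx (-1)) (const_mx 1) 1.
Definition Vmx : 'M[R]_(1 + p) :=
  block_mx s%:M (const_mx s) (const_mx (-s)) (1 - const_mx s).

Lemma sS : s + s *+ p = 1.
Proof.
rewrite -mulr_natr -{1}(mulr1 s) -mulrDr -(natrD _ 1 p) add1n /s mulVf //.
by rewrite pnatr_eq0.
Qed.

Lemma UV : Umx *m Vmx = 1%:M.
Proof.
rewrite /Umx /Vmx mulmx_block !mul1mx !mul_const mulmxBr mulmx1 mul_const.
rewrite mul_mx_scalar (scalar_mx_block 1 p 1).
have := sS => hs.
congr block_mx; apply/matrixP=> i j; rewrite !mxE //.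
- by rewrite [i]ord1 [j]ord1 eqxx mulr1n mulN1r opprK hs.
- by rewrite mulN1r mulNrn opprK addrCA hs addNr.
- by rewrite mulr1 subrr.
- by rewrite mul1r mulr1n addrCA subrr addr0.
Qed.

Lemma VU : Vmx *m Umx = 1%:M.
Proof. exact: mulmx1C UV. Qed.

Lemma U_unit : Umx \in unitmx.
Proof. by case: (mulmx1_unit UV). Qed.

Definition e1c : 'M[R]_(1 + p, 1) := col_mx 1%:M 0.
Definition e1r : 'M[R]_(1, 1 + p) := row_mx 1%:M 0.

Lemma U_e1 : Umx *m e1c = const_mx 1.
Proof.
rewrite /Umx /e1c mul_block_col !mulmx0 !addr0 !mulmx1.
apply/matrixP=> i j; rewrite !mxE; case: splitP => k _; rewrite !mxE //.
by rewrite !ord1.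
Qed.

Lemma ones_U : const_mx 1 *m Umx = row_mx (p.+1)%:R%:M 0.
Proof.
rewrite /Umx -[const_mx 1 : 'M_(1, 1 + p)]row_mx_const mul_row_block !mulmx1.
rewrite !mul_const.
congr row_mx; apply/matrixP=> i j; rewrite !mxE.
  by rewrite !ord1 mul1r -(natrD _ 1 p) add1n.
by rewrite mul1r mulr1n addNr.
Qed.

Lemma ones_U' : const_mx 1 *m Umx = (p.+1)%:R *: e1r.
Proof. by rewrite ones_U /e1r scale_row_mx scaler0 scalemx1. Qed.

Lemma regular_split (S : 'M[R]_(1+p)) (d : R) :
  S *m (const_mx 1 : 'M_(1 + p, 1)) = const_mx d ->
  (const_mx 1 : 'M_(1, 1 + p)) *m S = const_mx d ->
  { S' : 'M[R]_p | S *m Umx = Umx *m block_mx d%:M 0 0 S' }.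
Proof.
move=> hr hc.
set T : 'M[R]_(1+p) := Vmx *m S *m Umx.
exists (drsubmx T).
have TU : S *m Umx = Umx *m T by rewrite /T !mulmxA UV mul1mx.
have cd : forall q r, (const_mx d : 'M[R]_(q, r)) = d *: const_mx 1.
  by move=> q r; rewrite scalemx_const mulr1.
have h1 : T *m e1c = d *: e1c.
  rewrite /T -mulmxA U_e1 -mulmxA hr cd -scalemxAr -U_e1 mulmxA VU mul1mx //.
have h2 : e1r *m T = d *: e1r.
  have ev : e1r *m Vmx = (p.+1)%:R^-1 *: const_mx 1.
    apply: (canRL (scalerK _)); first by rewrite pnatr_eq0.
    by rewrite scalemxAl -ones_U' -mulmxA UV mulmx1.
  rewrite /T !mulmxA ev -!scalemxAl hc cd -scalemxAl ones_U' !scalerA.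
  by rewrite mulrAC mulVf ?pnatr_eq0 // mul1r.
rewrite TU; move: h1 h2; rewrite -[T]submxK /e1c /e1r mul_block_col mul_row_block.
rewrite !mulmx1 !mul1mx !mulmx0 !mul0mx !addr0 scale_col_mx scale_row_mx !scaler0.
move=> /eq_col_mx [-> ->] /eq_row_mx [_ ->].
by rewrite scalemx1 block_mxKdr.
Qed.

End U.


Section Helpers.
Variable R : fieldType.



Lemma simil_char_poly k (A B P : 'M[R]_k) :
  P \in unitmx -> A *m P = P *m B -> char_poly A = char_poly B.
Proof.
move=> uP eAP.
have e : char_poly_mx A *m map_mx polyC P = map_mx polyC P *m char_poly_mx B.
  rewrite /char_poly_mx mulmxBl mulmxBr -!map_mxM eAP; congr (_ - _).
  by rewrite scalar_mxC.
have := congr1 determinant e; rewrite !det_mulmx det_map_mx.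
rewrite mulrC; move/mulfI; apply.
rewrite polyC_eq0; move: uP; rewrite unitmxE unitfE //.
Qed.

Lemma char_poly_bdiag p q (A : 'M[R]_p) (B : 'M[R]_q) :
  char_poly (block_mx A 0 0 B) = char_poly A * char_poly B.
Proof.
rewrite /char_poly /char_poly_mx map_block_mx !map_mx0 (scalar_mx_block p q).
by rewrite opp_block_mx add_block_mx !oppr0 !addr0 det_ublock.
Qed.

Lemma char_poly_scalar1 (d : R) : char_poly (d%:M : 'M[R]_1) = 'X - d%:P.
Proof.
by rewrite /char_poly /char_poly_mx det_mx11 !mxE !mulr1n.
Qed.

Lemma char_poly_castmx p q (e : p = q) (A : 'M[R]_p) :
  char_poly (castmx (e, e) A) = char_poly A.
Proof. by case: q / e; rewrite castmx_id. Qed.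

End Helpers.


Section Shape.
Variable R : comNzRingType.

Lemma castmx0' p q p' q' (e : (p = p') * (q = q')) :
  castmx e (0 : 'M[R]_(p, q)) = 0.
Proof. by apply/matrixP=> i j; rewrite castmxE !mxE. Qed.

Lemma castmxD' p q p' q' (e : (p = p') * (q = q')) (A B : 'M[R]_(p, q)) :
  castmx e (A + B) = castmx e A + castmx e B.
Proof. by apply/matrixP=> i j; rewrite [in RHS]mxE !castmxE mxE. Qed.

Lemma Tur_shape (m' n : nat) (X : 'M[R]_n) (a : R) :
  castmx (mul1n n, erefl) (row_mx (a%:M : 'M_1) (0 : 'M_(1, m')) *t X)
  = row_mx (a *: X) 0 :> 'M_(n, n + m' * n).
Proof.
rewrite tens_row_mx tens_scalar_mx tens0mx castmx_comp.
rewrite (castmx_row (mul1n n) (erefl (m' * n))) castmx_comp castmx_id castmx0' //.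
Qed.

Lemma Tdl_shape (m' n : nat) (X : 'M[R]_n) :
  castmx (erefl, mul1n n) (col_mx (1%:M : 'M_1) (0 : 'M_(m', 1)) *t X)
  = col_mx X 0 :> 'M_(n + m' * n, n).
Proof.
rewrite tens_col_mx tens_scalar_mx tens0mx castmx_comp scale1r.
rewrite (castmx_col (mul1n n) (erefl (m' * n))) castmx_comp castmx_id castmx0' //.
Qed.

Lemma Tdr_shape (m' n : nat) (JI : 'M[R]_n) (a d : R) (S' : 'M[R]_m') :
  block_mx (a%:M : 'M_1) 0 0 0 *t JI + block_mx (d%:M : 'M_1) 0 0 S' *t (1%:M : 'M_n)
  = block_mx (a *: JI + d *: 1%:M) 0 0 (S' *t 1%:M) :> 'M_(n + m' * n).
Proof.
rewrite !tens_block_mx !tens_scalar_mx !tens0mx -castmxD' add_block_mx !addr0 add0r.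
rewrite (castmx_block (mul1n n) (mul1n n) (erefl (m' * n)) (erefl (m' * n))).
by rewrite castmxD' !castmx_comp !castmx_id !castmx0'.
Qed.

Lemma det_castmx p q (e : p = q) (A : 'M[R]_p) :
  \det (castmx (e, e) A) = \det A.
Proof. by case: q / e; rewrite castmx_id. Qed.

Lemma det_1tens p n (A : 'M[R]_p) : \det ((1%:M : 'M_n) *t A) = \det A ^+ n.
Proof.
elim: n => [|n IH]; first by rewrite expr0 det_mx00.
rewrite (scalar_mx_block 1 n 1) tens_block_mx det_castmx !tens0mx det_ublock.
by rewrite tens_scalar_mx scale1r det_castmx IH exprS.
Qed.

Lemma det_tens1 p n (A : 'M[R]_p) : \det (A *t (1%:M : 'M_n)) = \det A ^+ n.
Proof.
pose h (k : 'I_(p * n)) : 'I_(p * n) :=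
  cast_ord (mulnC n p) (mxtens_index ((mxtens_unindex k).2, (mxtens_unindex k).1)).
have hinj : injective h.
  move=> k1 k2 /cast_ord_inj /(can_inj (@mxtens_indexK _ _)) /eqP.
  rewrite xpair_eqE => /andP [/eqP e2 /eqP e1].
  apply: (can_inj (@mxtens_unindexK _ _)).
  by rewrite [LHS]surjective_pairing e1 e2 -surjective_pairing.
pose s := perm hinj.
pose B := castmx (mulnC n p, mulnC n p) ((1%:M : 'M_n) *t A).
have eB : A *t 1%:M = row_perm s (col_perm s B).
  apply/matrixP=> k l; rewrite !mxE /B castmxE !permE /h !cast_ordK tensmxE.
  by rewrite !mxE mulrC.
rewrite eB row_permE col_permE !det_mulmx !det_perm odd_permV /B det_castmx det_1tens.
by rewrite mulrCA -signr_addb addbb expr0 mulr1.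
Qed.

Lemma tensmxBl p q r t (A B : 'M[R]_(p, q)) (C : 'M[R]_(r, t)) :
  (A - B) *t C = A *t C - B *t C.
Proof. by apply/matrixP=> i j; rewrite !mxE mulrBl. Qed.

Lemma tensmxDl p q r t (A B : 'M[R]_(p, q)) (C : 'M[R]_(r, t)) :
  (A + B) *t C = A *t C + B *t C.
Proof. by apply/matrixP=> i j; rewrite !mxE mulrDl. Qed.

Lemma tens_scalar_1 p n (c : R) :
  (c%:M : 'M_p) *t (1%:M : 'M_n) = c%:M.
Proof.
apply/matrixP=> i j.
case: (mxtens_indexP i) => i0 i1; case: (mxtens_indexP j) => j0 j1.
rewrite tensmxE !mxE (inj_eq (can_inj (@mxtens_indexK _ _))) xpair_eqE.
by case: (i0 == j0); case: (i1 == j1); rewrite /= ?mulr1 ?mulr0 ?mul0r.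
Qed.

End Shape.

Lemma char_poly_tens1 (R : comNzRingType) p n (A : 'M[R]_p) :
  char_poly (A *t (1%:M : 'M_n)) = char_poly A ^+ n.
Proof.
rewrite /char_poly -det_tens1 /char_poly_mx; congr (\det _).
by rewrite tensmxBl tens_scalar_1 map_mxT map_mx1.
Qed.


Lemma hadj_rowsum_nat n k r (E : {set {set 'I_n}}) :
  is_regular_hypergraph k r E -> forall i : 'I_n,
  (\sum_(j : 'I_n) (if i != j then #|[set e in E | (i \in e) && (j \in e)]| else 0)
   = r * k.-1)%N.
Proof.
move=> [_ [hk hr]] i.
have H : forall j : 'I_n, (if i != j then #|[set e in E | (i \in e) && (j \in e)]| else 0)
    = (\sum_(e in E) ((i != j) && (i \in e) && (j \in e) : nat))%N.
  move=> j; rewrite -sum1_card big_mkcond [RHS]big_mkcond /=.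
  case: (i != j) => /=.
    by apply: eq_bigr => e _; rewrite inE; case: (e \in E).
  by rewrite big1 // => e _; case: (_ \in _).
rewrite (eq_bigr _ (fun j _ => H j)) exchange_big /=.
rewrite (eq_bigr (fun e : {set 'I_n} => if i \in e then k.-1 else 0%N)); last first.
  move=> e eE; case ie: (i \in e) => /=; last by rewrite big1 // => j _; rewrite andbF.
  rewrite -(hk e eE) (cardsD1 i e) ie add1n /= -sum1_card [RHS]big_mkcond /=.
  by apply: eq_bigr => j _; rewrite !inE andbT eq_sym; case: (_ && _).
rewrite -big_mkcondr /= sum_nat_const -(hr i).
congr (_ * _)%N; apply: eq_card => e; rewrite !inE.
by [].
Qed.

Lemma hadj_sym (R : pzRingType) n (E : {set {set 'I_n}}) : (hadj R E)^T = hadj R E.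
Proof.
apply/matrixP=> i j; rewrite !mxE eq_sym.
suff -> : [set e in E | (j \in e) && (i \in e)] = [set e in E | (i \in e) && (j \in e)] by [].
by apply/setP=> e; rewrite !inE [(j \in e) && _]andbC.
Qed.

Lemma hseidel_sym (R : pzRingType) n (E : {set {set 'I_n}}) : (hseidel R E)^T = hseidel R E.
Proof. by rewrite /hseidel !linearB /= linearZ /= hadj_sym trmx_const tr_scalar_mx. Qed.

Lemma hseidel_rowsum (R : numFieldType) n k r (E : {set {set 'I_n}}) :
  is_regular_hypergraph k r E ->
  hseidel R E *m (const_mx 1 : 'M_(n, 1))
  = const_mx (n%:R - 1 - 2%:R * r%:R * (k%:R - 1)).
Proof.
move=> hreg; have := hadj_rowsum_nat hreg => hs.
have [_ [hk hr]] := hreg.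
apply/matrixP=> i j; rewrite !mxE.
under eq_bigr do rewrite !mxE mulr1.
rewrite !big_split /= sumr_const card_ord.
have -> : \sum_(l < n) (1 *- (i == l) : R) = -1.
  rewrite sumrN (bigD1 i) //= eqxx big1 ?addr0 // => l /negPf; rewrite eq_sym => ->.
  by [].
have -> : \sum_(l < n) - (2%:R * (if i != l then #|[set e in E | (i \in e) && (l \in e)]|%:R else 0))
   = - (2%:R * (r * k.-1)%:R) :> R.
  rewrite sumrN -mulr_sumr -(hs i) natr_sum; congr (- (_ * _)).
  by apply: eq_bigr => l _; case: (i != l).
rewrite -mulrA; congr (_ - 1 - 2 * _).
case: (posnP r) => [->|r0]; first by rewrite mul0n !(mul0r, mulr0n).
have : (0 < #|[set e in E | i \in e]|)%N by rewrite hr.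
case/card_gt0P => e; rewrite inE => /andP [eE _].
have := hreg.1 e eE; rewrite (hk e eE); case: k {hk hs hreg hr} => // -[|k'] // _.
by rewrite natrM -subn1 natrB.
Qed.

Lemma hseidel_colsum (R : numFieldType) n k r (E : {set {set 'I_n}}) :
  is_regular_hypergraph k r E ->
  (const_mx 1 : 'M_(1, n)) *m hseidel R E
  = const_mx (n%:R - 1 - 2%:R * r%:R * (k%:R - 1)).
Proof.
move=> hreg; apply: trmx_inj; rewrite trmx_mul hseidel_sym trmx_const.
by rewrite (hseidel_rowsum _ hreg) trmx_const.
Qed.


Lemma det_block_comm (R : idomainType) p (A B C D : 'M[R]_p) :
  C *m D = D *m C -> \det D != 0 ->
  \det (block_mx A B C D) = \det (A *m D - B *m C).
Proof.
move=> hCD hD.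
have e : block_mx A B C D *m block_mx D 0 (- C) 1%:M
         = block_mx (A *m D - B *m C) B 0 D.
  rewrite mulmx_block !mulmx0 !mulmx1 ?addr0 !add0r !mulmxN hCD subrr.
  by [].
have := congr1 determinant e; rewrite det_mulmx det_lblock det_ublock det1 mulr1.
by move/(mulIf hD).
Qed.

Lemma horner_char (L : comNzRingType) p (B : 'M[L]_p) (y : L) :
  (char_poly B).[y] = \det (y%:M - B).
Proof.
rewrite /char_poly -horner_evalE -det_map_mx; congr (\det _).
apply/matrixP=> i j; rewrite !mxE /= !horner_evalE.
by rewrite hornerD hornerN hornerMn hornerX hornerC.
Qed.

Lemma det_quad (R : fieldType) p (A : 'M[R]_p) (mu : 'I_p -> R) (f g : {poly R}) :
  f != 0 -> char_poly A = \prod_(i < p) ('X - (mu i)%:P) ->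
  \det (f *: char_poly_mx A - g%:M) = \prod_(i < p) (f * ('X - (mu i)%:P) - g).
Proof.
move=> f0 hA.
apply/eqP; rewrite -(tofrac_eq (\det _)); apply/eqP.
rewrite -det_map_mx.
set F := (@tofrac {poly R}) f.
have F0 : F != 0 by rewrite tofrac_eq0.
set y := (@tofrac {poly R}) 'X - (@tofrac {poly R}) g / F.
have e : map_mx (@tofrac {poly R}) (f *: char_poly_mx A - g%:M)
         = F *: (y%:M - map_mx (@tofrac {poly R}) (map_mx polyC A)).
  apply/matrixP=> i j; rewrite !mxE; case: (i == j); rewrite /= ?mulr1n ?mulr0n.
    rewrite !rmorphB !rmorphM /= -/F /y rmorphB mulrBr [RHS]mulrBr mulrBr.
    by rewrite [F * (_ / F)]mulrC mulfVK // addrAC.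
  by rewrite subr0 sub0r mulrN rmorphN rmorphM sub0r mulrN.
rewrite e detZ -horner_char -map_char_poly -map_char_poly hA.
rewrite !map_prod_XsubC horner_prod rmorph_prod.
rewrite -[p in F ^+ p]card_ord -prodr_const -big_split /=.
apply: eq_bigr => i _.
rewrite hornerXsubC /y !rmorphB rmorphM rmorphB -/F mulrBr mulrBr.
rewrite [F * (_ / F)]mulrC mulfVK //.
by rewrite mulrBr addrAC.
Qed.

Section CP.
Variable R : comNzRingType.
Local Notation pC := (map_mx (@polyC R)).

Lemma cp_block p q (A : 'M[R]_p) B C (D : 'M[R]_q) :
  char_poly_mx (block_mx A B C D)
  = block_mx (char_poly_mx A) (- pC B) (- pC C) (char_poly_mx D).
Proof.
rewrite /char_poly_mx map_block_mx (scalar_mx_block p q).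
by rewrite opp_block_mx add_block_mx !add0r.
Qed.

Lemma cp_bd p q (a : 'M[R]_p) (A : 'M[R]_q) :
  char_poly_mx (block_mx a 0 0 A) = block_mx (char_poly_mx a) 0 0 (char_poly_mx A).
Proof. by rewrite cp_block !map_mx0 !oppr0. Qed.

Lemma cp_scalar k (c : R) : char_poly_mx (c%:M : 'M[R]_k) = ('X - c%:P)%:M.
Proof.
apply/matrixP=> i j; rewrite !mxE; case: (i == j); rewrite /= ?mulr1n ?mulr0n //.
by rewrite subr0.
Qed.

Lemma bd_map p q (a : 'M[R]_p) (A : 'M[R]_q) :
  pC (block_mx a 0 0 A) = block_mx (pC a) 0 0 (pC A).
Proof. by rewrite map_block_mx !map_mx0. Qed.

Lemma bd_scale (K : pzRingType) p q (c : K) (a : 'M[K]_p) (A : 'M[K]_q) :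
  c *: block_mx a 0 0 A = block_mx (c *: a) 0 0 (c *: A).
Proof. by rewrite scale_block_mx !scaler0. Qed.

Lemma bd_opp (K : pzRingType) p q (a : 'M[K]_p) (A : 'M[K]_q) :
  - block_mx a 0 0 A = block_mx (- a) 0 0 (- A).
Proof. by rewrite opp_block_mx !oppr0. Qed.

Lemma bd_sub (K : pzRingType) p q (a b : 'M[K]_p) (A B : 'M[K]_q) :
  block_mx a 0 0 A - block_mx b 0 0 B = block_mx (a - b) 0 0 (A - B).
Proof. by rewrite bd_opp add_block_mx !addr0. Qed.

Lemma bdM' (K : pzRingType) p q (a b : 'M[K]_p) (A B : 'M[K]_q) :
  block_mx a 0 0 A *m block_mx b 0 0 B = block_mx (a *m b) 0 0 (A *m B).
Proof. by rewrite mulmx_block !mulmx0 !mul0mx !addr0 !add0r. Qed.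

End CP.

Section T1.
Variable R : numFieldType.
Variable n' : nat.
Local Notation n := (1 + n')%N.
Local Notation U := (Umx R n').
Let nR : R := n%:R.

Lemma J_U : (const_mx 1 : 'M[R]_n) *m U = U *m block_mx nR%:M 0 0 0.
Proof.
have -> : (const_mx 1 : 'M[R]_n) = (const_mx 1 : 'M_(n, 1)) *m (const_mx 1 : 'M_(1, n)).
  by rewrite mul_const mulr1.
rewrite -mulmxA ones_U -U_e1 -mulmxA; congr (_ *m _).
by rewrite /e1c mul_col_row !mul1mx !mul0mx.
Qed.

Lemma bd_U_scalar (a : R) : (a%:M : 'M[R]_n) = block_mx a%:M 0 0 a%:M.
Proof. exact: scalar_mx_block. Qed.

Lemma comb_U (al be : R) :
  (al *: const_mx 1 + be%:M : 'M[R]_n) *m U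
  = U *m block_mx (al * nR + be)%:M 0 0 be%:M.
Proof.
rewrite mulmxDl -scalemxAl J_U -scalar_mxC scalemxAr -mulmxDr; congr (_ *m _).
rewrite (bd_U_scalar be) scale_block_mx add_block_mx !scaler0 !addr0 add0r.
by rewrite scale_scalar_mx -(raddfD (@scalar_mx _ 1)).
Qed.

Lemma bdM p q (a b : 'M[R]_p) (A B : 'M[R]_q) :
  block_mx a 0 0 A *m block_mx b 0 0 B = block_mx (a *m b) 0 0 (A *m B).
Proof. by rewrite mulmx_block !mulmx0 !mul0mx !addr0 !add0r. Qed.

Lemma charT1 (S0 : 'M[R]_n) (S0' : 'M[R]_n') (d0 d1 b mR : R) :
  S0 *m U = U *m block_mx d0%:M 0 0 S0' ->
  char_poly (block_mx S0 (mR *: (const_mx 1 - (2%:R * b) *: 1%:M))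
                (const_mx 1 - (2%:R * b) *: 1%:M)
                (mR *: (const_mx 1 - 1%:M) + d1 *: 1%:M))
  = (('X - d0%:P) * ('X - (mR * nR + (d1 - mR))%:P)
       - ((mR * (nR - 2%:R * b)) * (nR - 2%:R * b))%:P)
    * \det (('X - (d1 - mR)%:P) *: char_poly_mx S0'
             - ((mR * - (2%:R * b)) * - (2%:R * b))%:P%:M).
Proof.
move=> hS.
have eX : (const_mx 1 - (2%:R * b) *: 1%:M : 'M[R]_n) = 1 *: const_mx 1 + (- (2%:R * b))%:M.
  by apply/matrixP=> i j; rewrite !mxE; case: (i == j); rewrite /= ?mulr1n ?mulr0n; ring.
have eD : (mR *: (const_mx 1 - 1%:M) + d1 *: 1%:M : 'M[R]_n)
          = mR *: const_mx 1 + (d1 - mR)%:M.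
  by apply/matrixP=> i j; rewrite !mxE; case: (i == j); rewrite /= ?mulr1n ?mulr0n; ring.
rewrite eX eD.
pose Xt : 'M[R]_n := block_mx (1 * nR + - (2%:R * b))%:M 0 0 (- (2%:R * b))%:M.
pose Dt : 'M[R]_n := block_mx (mR * nR + (d1 - mR))%:M 0 0 (d1 - mR)%:M.
pose St : 'M[R]_n := block_mx d0%:M 0 0 S0'.
pose P : 'M[R]_(n + n) := block_mx U 0 0 U.
have uP : P \in unitmx.
  case: (@mulmx1_unit _ _ P (block_mx (Vmx R n') 0 0 (Vmx R n'))) => //.
  by rewrite bdM UV -scalar_mx_block.
rewrite (@simil_char_poly _ _ _ (block_mx St (mR *: Xt) Xt Dt) P uP); last first.
  rewrite /P [LHS]mulmx_block [RHS]mulmx_block !mulmx0 !mul0mx !addr0 !add0r.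
  by rewrite hS -scalemxAl comb_U comb_U scalemxAr.
rewrite /char_poly cp_block det_block_comm; last first.
- by have := char_poly_monic Dt; rewrite /char_poly => /monic_neq0.
- rewrite mulNmx mulmxN; congr (- _).
  rewrite /Xt /Dt !bd_map !cp_bd !map_scalar_mx !cp_scalar !bdM'.
  by rewrite -!scalar_mxM mulrC [_ * ('X - _)]mulrC.
rewrite /Xt /Dt /St !bd_scale !bd_map !bd_opp !cp_bd.
rewrite !scale_scalar_mx !map_scalar_mx !cp_scalar !bdM' bd_sub det_ublock.
rewrite !mulNmx !mulmxN !opprK -!scalar_mxM -(raddfB (@scalar_mx _ 1)) det_scalar1.
rewrite mul_mx_scalar mul1r -!polyCM.
by [].
Qed.
End T1.


Lemma char_poly_reassoc (R : fieldType) p q (S0 A B D : 'M[R]_p) (W : 'M[R]_q) :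
  char_poly (block_mx S0 (row_mx A 0) (col_mx B 0) (block_mx D 0 0 W))
  = char_poly (block_mx S0 A B D) * char_poly W.
Proof.
rewrite block_mxA char_poly_castmx col_mx0 row_mx0 char_poly_bdiag //.
Qed.


Unset Implicit Arguments.
Set Strict Implicit.
Set Printing Implicit Defensive.

Theorem theorem4p3 (R : rcfType) (n m k r0 r1 : nat)
  (E0 : {set {set 'I_n}}) (E1 : {set {set 'I_m}})
  (mu0 : 'I_n.-1 -> R) (mu1 : 'I_m.-1 -> R) :
  is_regular_hypergraph k r0 E0 ->
  is_regular_hypergraph k r1 E1 ->
  char_poly (hseidel R E0)
    = ('X - ((n%:R - 1 - 2%:R * r0%:R * (k%:R - 1)) : R)%:P)
      * \prod_(i < n.-1) ('X - (mu0 i)%:P) ->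
  char_poly (hseidel R E1)
    = ('X - ((m%:R - 1 - 2%:R * r1%:R * (k%:R - 1)) : R)%:P)
      * \prod_(j < m.-1) ('X - (mu1 j)%:P) ->
  let b : R := (corona_b m k)%:R in
  let c : R := 2%:R * r1%:R * (k%:R - 1) in
  let disc (x : R) := Num.sqrt ((x + 1 + c) ^+ 2 + 16%:R * m%:R * b ^+ 2) in
  char_poly (seidel_corona R k E0 E1)
    = (\prod_(i < n.-1)
         (('X - (((mu0 i - 1 - c) + disc (mu0 i)) / 2%:R)%:P)
          * ('X - (((mu0 i - 1 - c) - disc (mu0 i)) / 2%:R)%:P)))
      * (\prod_(j < m.-1) ('X - (mu1 j)%:P)) ^+ n
      * ('X ^+ 2
         + ((2%:R - n%:R * (m%:R + 1) + 2%:R * (r0%:R + r1%:R) * (k%:R - 1)) : R) *: 'X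
         + (((n%:R - 1 - 2%:R * r0%:R * (k%:R - 1))
             * (m%:R * n%:R - 1 - 2%:R * r1%:R * (k%:R - 1))
             - m%:R * (n%:R - 2%:R * b) ^+ 2) : R)%:P).
Proof.
move=> hE0 hE1 hc0 hc1.
case: n E0 mu0 hE0 hc0 => [|n'] E0 mu0 hE0 hc0.
  move: hc0; rewrite big_ord0 mulr1 => hh; have := congr1 (fun q : {poly R} => size q) hh.
  by rewrite size_XsubC size_char_poly.
case: m E1 mu1 hE1 hc1 => [|m'] E1 mu1 hE1 hc1.
  move: hc1; rewrite big_ord0 mulr1 => hh; have := congr1 (fun q : {poly R} => size q) hh.
  by rewrite size_XsubC size_char_poly.
move=> b c disc.
set d0 : R := _ - 1 - _ in hc0.
set d1 : R := _ - 1 - _ in hc1.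
have [S0' hS0] := regular_split (hseidel_rowsum R hE0) (hseidel_colsum R hE0).
have [S1' hS1] := regular_split (hseidel_rowsum R hE1) (hseidel_colsum R hE1).
have cS0 : char_poly S0' = \prod_(i < n') ('X - (mu0 i)%:P).
  have := simil_char_poly (U_unit R n') hS0.
  rewrite char_poly_bdiag char_poly_scalar1 hc0 => h.
  by apply/esym/(mulfI (monic_neq0 (monicXsubC d0))); rewrite h.
have cS1 : char_poly S1' = \prod_(i < m') ('X - (mu1 i)%:P).
  have := simil_char_poly (U_unit R m') hS1.
  rewrite char_poly_bdiag char_poly_scalar1 hc1 => h.
  by apply/esym/(mulfI (monic_neq0 (monicXsubC d1))); rewrite h.
pose X : 'M[R]_(n'.+1) := const_mx 1 - (2%:R * b) *: 1%:M.
pose U := Umx R m'.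
pose Q : 'M[R]_(n'.+1 + m'.+1 * n'.+1) :=
  block_mx 1%:M 0 0 (U *t (1%:M : 'M_(n'.+1))).
pose Q' : 'M[R]_(n'.+1 + m'.+1 * n'.+1) :=
  block_mx 1%:M 0 0 (Vmx R m' *t (1%:M : 'M_(n'.+1))).
have uQ : Q \in unitmx.
  case: (@mulmx1_unit _ _ Q Q') => //.
  rewrite /Q /Q' bdM' mulmx1 tensmx_mul UV mulmx1 tens_scalar_1.
  by rewrite -scalar_mx_block.
pose T : 'M[R]_(n'.+1 + m'.+1 * n'.+1) :=
  block_mx (hseidel R E0)
    (castmx (mul1n _, erefl) (row_mx ((m'.+1)%:R%:M : 'M_1) (0 : 'M_(1, m')) *t X))
    (castmx (erefl, mul1n _) (col_mx (1%:M : 'M_1) (0 : 'M_(m', 1)) *t X))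
    (block_mx ((m'.+1)%:R%:M : 'M_1) 0 0 0 *t (const_mx 1 - 1%:M)
     + block_mx (d1%:M : 'M_1) 0 0 S1' *t (1%:M : 'M_(n'.+1))).
have eQ : seidel_corona R k E0 E1 *m Q = Q *m T.
  rewrite /seidel_corona -/b -/X /Q /T [LHS]mulmx_block [RHS]mulmx_block.
  rewrite !mulmx0 !mul0mx !mulmx1 !mul1mx !addr0 !add0r.
  congr block_mx.
  - rewrite -[U *t 1%:M](castmx_id (erefl, erefl)) -castmx_mul tensmx_mul mulmx1.
    by rewrite /U ones_U.
  - rewrite -[U *t 1%:M](castmx_id (erefl, erefl)) -castmx_mul tensmx_mul mul1mx.
    by rewrite /U (U_e1 R m').
  - rewrite mulmxDl mulmxDr !tensmx_mul !mulmx1 !mul1mx /U hS1 J_U.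
    by [].
rewrite (simil_char_poly uQ eQ) /T Tur_shape Tdl_shape Tdr_shape char_poly_reassoc.
rewrite char_poly_tens1 cS1 /X (charT1 d1 b (m'.+1)%:R hS0).
rewrite (det_quad _ (monic_neq0 (monicXsubC _)) cS0).
rewrite [RHS]mulrC [RHS]mulrA; congr (_ * _ * _).
- rewrite /d1 -mul_polyC.
  rewrite !(polyCB, polyCD, polyCM, polyCN, polyC_natr, polyC_exp, rmorph1).
  ring.
- apply: eq_bigr => i _.
  have e : forall x y : R, ('X - x%:P) * ('X - y%:P) = 'X^2 - (x + y)%:P * 'X + (x * y)%:P.
    by move=> x y; rewrite polyCD polyCM; ring.
  rewrite e.
  set mu := mu0 i.
  have hs : disc mu ^+ 2 = (mu + 1 + c) ^+ 2 + 16%:R * (m'.+1)%:R * b ^+ 2.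
    rewrite /disc sqr_sqrtr // addr_ge0 ?sqr_ge0 // mulr_ge0 ?sqr_ge0 //.
    by rewrite mulr_ge0 ?ler0n.
  have h1 : (mu - 1 - c + disc mu) / 2 + (mu - 1 - c - disc mu) / 2 = mu - 1 - c.
    by field.
  have h2 : (mu - 1 - c + disc mu) / 2 * ((mu - 1 - c - disc mu) / 2)
            = - (mu * (1 + c)) - 4%:R * (m'.+1)%:R * b ^+ 2.
    transitivity (((mu - 1 - c) ^+ 2 - disc mu ^+ 2) / 4%:R); first by field.
    by rewrite hs; field.
  rewrite h1 h2 /d1 /c.
  rewrite !(polyCB, polyCD, polyCM, polyCN, polyC_natr, polyC_exp, rmorph1).
  ring.
Qed.
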